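(* Let $p\in(1,2]$, let $u$ be an ancient solution of the half-space problem $u_t-\Delta u=|\nabla u|^p$ in $\mathbb{R}^n_+\times(-\infty,0)$, $u=0$ on $\partial\mathbb{R}^n_+\times(-\infty,0)$, let $\varepsilon>0$ and assume $$M_1:=\sup_{\Gamma_1\times(-\infty,-\varepsilon]}|u|<\infty.$$ Then there is $C=C(n,p,M_1)>0$ such that $|u(x,t)|\le C x_n$ for all $(x,t)\in\Gamma_1\times(-\infty,-\varepsilon]$.
   Context: $\mathbb{R}^n_+:=\{x\in\mathbb{R}^n: x_n>0\}$, $\Gamma_R:=\{x\in\mathbb{R}^n: 0<x_n<R\}$. An ancient solution of the half-space problem is a function $u\in C^{2,1}(Q)\cap C(\overline Q)$, $Q=\mathbb{R}^n_+\times(-\infty,0)$, satisfying the PDE pointwise in $Q$ and $u=0$ pointwise on $\partial\mathbb{R}^n_+\times(-\infty,0)$. *)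

(* Defs.v *)
From HB Require Import structures.
From mathcomp Require Import all_boot all_order all_algebra.
From mathcomp Require Import all_classical all_reals all_analysis.
Set Implicit Arguments. Unset Strict Implicit. Unset Printing Implicit Defensive.
Import Order.TTheory GRing.Theory Num.Theory.
Import numFieldNormedType.Exports.
Local Open Scope classical_set_scope.
Local Open Scope ring_scope.

Section Defs.
Variables (R : realType) (N : nat).
(* space R^(N.+1); the last coordinate x_n is the entry ord_max *)
Notation pt := 'rV[R]_N.+1.

Definition xlast (x : pt) : R := x ord0 ord_max.

Definition unitv (i : 'I_N.+1) : pt := delta_mx ord0 i.

Definition dpart (i : 'I_N.+1) (f : pt -> R) (x : pt) : R := 'D_(unitv i) f x.

Definition Qset : set (pt * R) := [set z | 0 < xlast z.1 /\ z.2 < 0].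
Definition Qbar : set (pt * R) := [set z | 0 <= xlast z.1 /\ z.2 <= 0].

Definition ut (u : pt -> R -> R) (x : pt) (t : R) : R := 'D_1 (fun s => u x s) t.
Definition ux (u : pt -> R -> R) (i : 'I_N.+1) (x : pt) (t : R) : R :=
  dpart i (fun y => u y t) x.
Definition uxx (u : pt -> R -> R) (i j : 'I_N.+1) (x : pt) (t : R) : R :=
  dpart j (fun y => ux u i y t) x.

Definition cont_at (g : pt * R -> R) (z : pt * R) : Prop := g w @[w --> z] --> g z.

Definition C21_Q (u : pt -> R -> R) : Prop :=
  forall z, Qset z ->
    [/\ cont_at (fun w => u w.1 w.2) z,
        derivable (fun s => u z.1 s) z.2 1 /\ cont_at (fun w => ut u w.1 w.2) z,
        (forall i, derivable (fun y => u y z.2) z.1 (unitv i) /\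
                   cont_at (fun w => ux u i w.1 w.2) z) &
        (forall i j, derivable (fun y => ux u i y z.2) z.1 (unitv j) /\
                   cont_at (fun w => uxx u i j w.1 w.2) z)].

Definition laplacian (u : pt -> R -> R) (x : pt) (t : R) : R :=
  \sum_(i < N.+1) uxx u i i x t.

Definition gradnorm (u : pt -> R -> R) (x : pt) (t : R) : R :=
  Num.sqrt (\sum_(i < N.+1) (ux u i x t) ^+ 2).

Definition ancient_solution (p : R) (u : pt -> R -> R) : Prop :=
  [/\ C21_Q u,
      {within Qbar, continuous (fun w : pt * R => u w.1 w.2)},
      (forall x t, 0 < xlast x -> t < 0 ->
         ut u x t - laplacian u x t = (gradnorm u x t) `^ p) &
      (forall x t, xlast x = 0 -> t < 0 -> u x t = 0)].

Definition Gamma1_eps (eps : R) : set (pt * R) :=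
  [set z | 0 < xlast z.1 < 1 /\ z.2 <= - eps].

Definition absvals (u : pt -> R -> R) (A : set (pt * R)) : set R :=
  [set `|u z.1 z.2| | z in A].
End Defs.

(* Main.v *)
Require Import Defs.
From HB Require Import structures.
From mathcomp Require Import all_boot all_order all_algebra.
From mathcomp Require Import all_classical all_reals all_analysis.
From mathcomp Require Import ring lra.
Import Order.TTheory GRing.Theory Num.Theory.
Import numFieldNormedType.Exports. Import Num.Def.
Local Open Scope classical_set_scope.
Local Open Scope ring_scope.

Lemma isd_dv {R : realType} {f : R -> R} {x v d : R} :
  is_derive x v f d -> derivable f x v.
Proof. by case. Qed.

Lemma isd_val {R : realType} {f : R -> R} {x v d : R} :
  is_derive x v f d -> 'D_v f x = d.
Proof. by case. Qed.

Lemma is_derive_quot {R : realType} {f : R -> R} {x d : R} :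
  is_derive x 1 f d -> (fun h : R => h^-1 * (f (h + x) - f x)) @ 0^' --> d.
Proof.
case=> fd <-; move: fd; rewrite /derivable /derive.
rewrite (_ : (fun h : R => h^-1 *: ((f \o shift x) (h *: 1) - f x)) =
             (fun h : R => h^-1 * (f (h + x) - f x))) //.
by apply: funext => h /=; rewrite /shift /= -[h *: 1]/(h * 1) mulr1.
Qed.

Lemma near0_ball {R : realType} {P : R -> Prop} :
  (\forall h \near 0^', P h) -> exists2 e : R, 0 < e & forall h, h != 0 -> `|h| < e -> P h.
Proof.
move=> /nbhs_ballP [e e0 He]; exists e => // h h0 he; apply: He => //.
by rewrite /ball /= sub0r normrN.
Qed.

Lemma min2 (R : realType) (g g' : R -> R) (d2 r : R) : 0 < r ->
  (forall s, -r < s < r -> g 0 <= g s) ->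
  (forall s, -r < s < r -> is_derive s (1:R) g (g' s)) ->
  is_derive 0 (1:R) g' d2 -> 0 <= d2.
Proof.
move=> r0 gmin gd g'd.
have g'0 : g' 0 = 0.
  have r0' : -r < 0 < r by rewrite oppr_lt0 r0.
  have h0 : is_derive 0 (1:R) g 0.
    apply: (@derive1_at_min _ g (-r) r) => [|t|| t].
    - by rewrite lerNl; lra.
    - by rewrite in_itv /= => /gd/isd_dv.
    - by rewrite in_itv /=.
    - by rewrite in_itv /= => /gmin.
  by rewrite -(isd_val (gd 0 r0')) (isd_val h0).
rewrite leNgt; apply/negP => d2lt0.
have [e e0 He] := near0_ball (cvgr_lt _ (is_derive_quot g'd) _ d2lt0).
pose s := minr e r / 2.
have s0 : 0 < s by rewrite divr_gt0 // lt_min e0 r0.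
have se : s < e by rewrite /s; have := ge_min e e r; rewrite lexx /=; lra.
have sr : s < r by rewrite /s; have := ge_min r e r; rewrite lexx orbT /=; lra.
have dneg c : 0 < c < s -> g' c < 0.
  case/andP => c0 cs.
  have := He c (lt0r_neq0 c0); rewrite gtr0_norm // => /(_ (lt_trans cs se)).
  by rewrite addr0 g'0 subr0 pmulr_rlt0 // invr_gt0.
have H1 : forall c, c \in `]0, s[ -> is_derive c (1:R) g (g' c).
  move=> c; rewrite in_itv /= => /andP[c0 cs]; apply: gd; lra.
have H2 : {within `[0, s], continuous g}.
  apply: derivable_within_continuous => c; rewrite in_itv /= => /andP[c0 cs].
  apply: (isd_dv (gd c _)); lra.
have [c cin] := MVT s0 H1 H2.
rewrite subr0 => E.
have := gmin s; rewrite -subr_ge0 E pmulr_lge0 // => H.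
have : g' c < 0 by apply: dneg; move: cin; rewrite in_itv.
rewrite ltNge H //; lra.
Qed.

Lemma tmin (R : realType) (h : R -> R) (t d r : R) : 0 < r ->
  (forall s, t - r < s <= t -> h t <= h s) -> is_derive t (1:R) h d -> d <= 0.
Proof.
move=> r0 hmin hd; rewrite leNgt; apply/negP => d0.
have [e e0 He] := near0_ball (cvgr_gt _ (is_derive_quot hd) _ d0).
pose s := minr e r / 2.
have s0 : 0 < s by rewrite divr_gt0 // lt_min e0 r0.
have se : s < e by rewrite /s; have := ge_min e e r; rewrite lexx /=; lra.
have sr : s < r by rewrite /s; have := ge_min r e r; rewrite lexx orbT /=; lra.
have := He (- s); rewrite oppr_eq0 normrN gtr0_norm // (gt_eqF s0) => /(_ isT se).
move=> Hq.
have H2 : 0 <= h (- s + t) - h t by rewrite subr_ge0; apply: hmin; lra.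
move: Hq; rewrite nmulr_rgt0 ?invr_lt0 ?oppr_lt0 //; lra.
Qed.


Lemma is_derive_ext {R : realType} (f g : R -> R) (x d : R) :
  f = g -> is_derive x (1:R) f d -> is_derive x (1:R) g d.
Proof. by move=> ->. Qed.

Lemma quad_derive {R : realType} (c1 c2 x : R) :
  is_derive x (1:R) (fun s => c1 * s + c2 * s ^+ 2) (c1 + 2 * c2 * x).
Proof.
pose q : {poly R} := c1 *: 'X + c2 *: 'X^2.
have -> : (fun s => c1 * s + c2 * s ^+ 2) = horner q.
  by apply: funext => s; rewrite /q !hornerE.
have -> : c1 + 2 * c2 * x = (deriv q).[x].
  rewrite /q !poly.derivE !hornerE /=; ring.
exact: is_derive_poly.
Qed.

Lemma lin_derive {R : realType} (c1 c2 x : R) :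
  is_derive x (1:R) (fun s => c1 + 2 * c2 * s) (2 * c2).
Proof.
pose q : {poly R} := c1%:P + (2 * c2) *: 'X.
have -> : (fun s => c1 + 2 * c2 * s) = horner q.
  by apply: funext => s; rewrite /q !hornerE.
have -> : 2 * c2 = (deriv q).[x].
  rewrite /q !poly.derivE !hornerE /=; ring.
exact: is_derive_poly.
Qed.

Lemma fadd_apply {R : realType} (f g : R -> R) x : (f + g) x = f x + g x.
Proof. by []. Qed.

Lemma so_lin {R : realType} (h : R -> R) (c1 c2 r : R) : 0 < r ->
  (forall s, -r < s < r -> h 0 <= h s + (c1 * s + c2 * s ^+ 2)) ->
  (forall s, -r < s < r -> derivable h s 1) ->
  derivable ('D_1 h) 0 1 ->
  0 <= 'D_1 ('D_1 h) 0 + 2 * c2.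
Proof.
move=> r0 hm hd h2.
apply: (@min2 R (h + (fun s => c1 * s + c2 * s ^+ 2))
   ('D_1 h + (fun s => c1 + 2 * c2 * s)) _ r r0).
- move=> s /hm; by rewrite !fadd_apply mulr0 expr0n /= mulr0 !addr0.
- move=> s sr; apply: is_deriveD; [exact: derivableP (hd s sr) | exact: quad_derive].
- apply: is_deriveD; [exact: derivableP h2 | exact: lin_derive].
Qed.

Lemma so_exp {R : realType} (h : R -> R) (c1 c2 r : R) : 0 < r ->
  (forall s, -r < s < r -> - expR (h 0) <= - expR (h s) + (c1 * s + c2 * s ^+ 2)) ->
  (forall s, -r < s < r -> derivable h s 1) ->
  derivable ('D_1 h) 0 1 ->
  expR (h 0) * ('D_1 ('D_1 h) 0 + ('D_1 h 0) ^+ 2) <= 2 * c2.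
Proof.
move=> r0 hm hd h2.
rewrite -subr_ge0.
have := (@min2 R ((fun s => - expR (h s)) + (fun s => c1 * s + c2 * s ^+ 2))
   ((fun s => - (expR (h s) * 'D_1 h s)) + (fun s => c1 + 2 * c2 * s))
   (- (expR (h 0) * 'D_1 ('D_1 h) 0 + 'D_1 h 0 * (expR (h 0) * 'D_1 h 0)) + 2 * c2) r r0).
have -> : expR (h 0) * ('D_1 ('D_1 h) 0 + ('D_1 h 0) ^+ 2) =
   expR (h 0) * 'D_1 ('D_1 h) 0 + 'D_1 h 0 * (expR (h 0) * 'D_1 h 0) by ring.
rewrite (addrC (2 * c2)); apply.
- move=> s /hm; by rewrite !fadd_apply mulr0 expr0n /= mulr0 !addr0.
- move=> s sr; apply: is_deriveD; last exact: quad_derive.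
  apply: (@is_derive_ext R (- (expR \o h))) => //.
  apply: is_deriveN; apply: is_derive1_comp; last exact: derivableP (hd s sr).
- apply: is_deriveD; last exact: lin_derive.
  apply: (@is_derive_ext R (- ((expR \o h) * 'D_1 h))) => //.
  apply: is_deriveN.
  have e1 : is_derive 0 (1:R) (expR \o h) (expR (h 0) * 'D_1 h 0).
    have r0' : -r < 0 < r by rewrite oppr_lt0 r0.
    by apply: is_derive1_comp; last exact: derivableP (hd 0 r0').
  have := is_deriveM e1 (derivableP h2).
  exact.
Qed.

Lemma lin1_derive {R : realType} (c x : R) : is_derive x (1:R) (fun s => c * s) c.
Proof.
pose q : {poly R} := c *: 'X.
have -> : (fun s => c * s) = horner q by apply: funext => s; rewrite /q !hornerE.
have -> : c = (deriv q).[x] by rewrite /q !poly.derivE !hornerE /=; ring.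
exact: is_derive_poly.
Qed.

Lemma t_lin {R : realType} (h : R -> R) (t c r : R) : 0 < r ->
  (forall s, t - r < s <= t -> h t + c * t <= h s + c * s) ->
  derivable h t 1 -> 'D_1 h t + c <= 0.
Proof.
move=> r0 hm hd.
apply: (@tmin R (h + (fun s => c * s)) t _ r r0).
- by move=> s /hm; rewrite !fadd_apply.
- apply: is_deriveD; [exact: derivableP hd | exact: lin1_derive].
Qed.

Lemma t_exp {R : realType} (h : R -> R) (t c r : R) : 0 < r ->
  (forall s, t - r < s <= t -> - expR (h t) + c * t <= - expR (h s) + c * s) ->
  derivable h t 1 -> - (expR (h t) * 'D_1 h t) + c <= 0.
Proof.
move=> r0 hm hd.
apply: (@tmin R ((fun s => - expR (h s)) + (fun s => c * s)) t _ r r0).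
- by move=> s /hm; rewrite !fadd_apply.
- apply: is_deriveD; last exact: lin1_derive.
  apply: (@is_derive_ext R (- (expR \o h))) => //.
  by apply: is_deriveN; apply: is_derive1_comp; last exact: derivableP hd.
Qed.


Definition Psq {R : realType} {N : nat} (x : 'rV[R]_N.+1) : R := \sum_(i < N.+1) (x ord0 i) ^+ 2.

Definition Kset {R : realType} {N : nat} (t0 : R) : set ('rV[R]_N.+1 * R) :=
  [set z | 0 <= xlast z.1 <= 2^-1 /\ z.2 <= t0].

Lemma unitvE (R : realType) (N : nat) (x : 'rV[R]_N.+1) (s : R) (i j : 'I_N.+1) :
  (x + s *: unitv R j) ord0 i = x ord0 i + s * (i == j)%:R.
Proof. by rewrite /unitv !mxE eqxx. Qed.

Lemma Psq_ge0 {R : realType} {N : nat} (x : 'rV[R]_N.+1) : 0 <= Psq x.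
Proof. by apply: sumr_ge0 => i _; exact: sqr_ge0. Qed.

Lemma Psq_coord {R : realType} {N : nat} (x : 'rV[R]_N.+1) i : (x ord0 i) ^+ 2 <= Psq x.
Proof.
rewrite /Psq (bigD1 i) //= lerDl; apply: sumr_ge0 => k _; exact: sqr_ge0.
Qed.

Lemma Psq_shift {R : realType} {N : nat} (x : 'rV[R]_N.+1) s j :
  Psq (x + s *: unitv R j) = Psq x + (2 * x ord0 j * s + s ^+ 2).
Proof.
rewrite /Psq (bigD1 j) //= [in RHS](bigD1 j) //= unitvE eqxx.
rewrite (eq_bigr (fun i => x ord0 i ^+ 2)); last first.
  by move=> i /negbTE ij; rewrite unitvE ij mulr0 addr0.
rewrite /=; ring.
Qed.

Lemma xlast_shift {R : realType} {N : nat} (x : 'rV[R]_N.+1) s j :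
  xlast (x + s *: unitv R j) = xlast x + s * (ord_max == j)%:R.
Proof. by rewrite /xlast unitvE. Qed.

Lemma sq_bound {R : realType} (y L : R) : 1 <= L -> y ^+ 2 < L -> - L <= y <= L.
Proof. move=> L1 yL; apply/andP; split; nra. Qed.

Lemma cont_sum {R : realType} {T : topologicalType} {I : Type} (s : seq I) (f : I -> T -> R) :
  (forall i, continuous (f i)) -> continuous (fun x => \sum_(i <- s) f i x).
Proof.
move=> hf x; elim: s => [|a s IH].
  rewrite (_ : (fun _ => _) = cst 0); first exact: cvg_cst.
  by apply: funext => y; rewrite big_nil.
rewrite (_ : (fun _ => _) = (fun y => f a y + \sum_(i <- s) f i y)); last first.
  by apply: funext => y; rewrite big_cons.
by apply: cvgD => //; exact: hf.
Qed.

Lemma cont_Psq {R : realType} {N : nat} : continuous (@Psq R N).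
Proof.
apply: cont_sum => i x.
rewrite (_ : (fun _ => _) = (fun y : 'rV[R]_N.+1 => y ord0 i * y ord0 i)); last first.
  by apply: funext => y; rewrite expr2.
have hc : (fun y : 'rV[R]_N.+1 => y ord0 i) @ x --> x ord0 i := @coord_continuous R 1 N.+1 ord0 i x.
exact: (cvgM hc hc).
Qed.

Lemma cont_xlast {R : realType} {N : nat} : continuous (@xlast R N).
Proof. by move=> x; exact: coord_continuous. Qed.

Lemma exists_min {R : realType} {N : nat} (W : 'rV[R]_N.+1 * R -> R) (t0 c0 d : R) :
  0 < d -> {within Kset t0, continuous W} ->
  (forall z, Kset t0 z -> c0 + d * (Psq z.1 + (t0 - z.2)) <= W z) ->
  forall z0, Kset t0 z0 -> W z0 < 0 ->
  exists2 z, Kset t0 z & forall z', Kset t0 z' -> W z <= W z'.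
Proof.
move=> d0 Wc Wco z0 Kz0 Wz0.
pose L := `|c0| / d + 1.
have L1 : 1 <= L by rewrite /L lerDr divr_ge0 // ltW.
pose A := fun i : 'I_N.+1 =>
  [set` (if i == ord_max then `[0, 2^-1] else `[- L, L])%R] : set R.
pose K' := [set v : 'rV[R]_N.+1 | forall i, A i (v ord0 i)] `*` [set` `[t0 - L, t0]%R].
have cK' : compact K'.
  apply: compact_setX; last exact: segment_compact.
  apply: rV_compact => i; rewrite /A; case: (i == ord_max); exact: segment_compact.
have K'K : K' `<=` Kset t0.
  move=> [x t] [/= /(_ ord_max)]; rewrite /A eqxx /= in_itv /= => xl.
  by rewrite in_itv /= => /andP[_ tt0]; split.
have inK' z : Kset t0 z -> Psq z.1 + (t0 - z.2) < L -> K' z.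
  case: z => x t [/= xl tt0] PL; split => /=.
    move=> i; rewrite /A; case: ifP => [/eqP -> | _] /=.
      by rewrite in_itv.
    rewrite in_itv /=; apply: sq_bound => //.
    have := Psq_coord x i; have := Psq_ge0 x; lra.
  rewrite in_itv /=; apply/andP; split; last by [].
  have := Psq_ge0 x; lra.
have big z : Kset t0 z -> ~ K' z -> 0 < W z.
  move=> Kz nK'; apply: (lt_le_trans _ (Wco z Kz)).
  have : L <= Psq z.1 + (t0 - z.2).
    by rewrite leNgt; apply/negP => /(inK' z Kz).
  move=> HL; have : d * L <= d * (Psq z.1 + (t0 - z.2)) by rewrite ler_pM2l.
  have -> : d * L = `|c0| + d by rewrite /L mulrDr mulrCA divff ?gt_eqF // mulr1 mulr1.
  have := ler_norm (- c0); rewrite normrN; lra.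
have K'z0 : K' z0.
  apply: inK' => //; have := Wco z0 Kz0.
  have : - c0 <= `|c0| by rewrite -normrN ler_norm.
  move=> c0n Wz; rewrite /L.
  have : d * (Psq z0.1 + (t0 - z0.2)) < `|c0| by lra.
  rewrite -ltr_pdivlMl // => H; apply: (lt_le_trans H); rewrite mulrC lerDl //.
have [zm zmK zmin] := compact_EVT_min (ex_intro _ z0 K'z0) cK'
   (continuous_subspaceW K'K Wc).
rewrite in_setE in zmK.
exists zm; first exact: K'K.
move=> z' Kz'; case: (pselect (K' z')) => [K'z'|nK'z'].
  by apply: zmin; rewrite in_setE.
have := big z' Kz' nK'z'; have : W zm <= W z0 by apply: zmin; rewrite in_setE.
lra.
Qed.


Lemma cont_xl {R : realType} {N : nat} : continuous (fun z : 'rV[R]_N.+1 * R => xlast z.1).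
Proof. move=> z; apply: continuous_comp; [exact: cvg_fst | exact: cont_xlast]. Qed.

Lemma cont_ps {R : realType} {N : nat} : continuous (fun z : 'rV[R]_N.+1 * R => Psq z.1).
Proof. move=> z; apply: continuous_comp; [exact: cvg_fst | exact: cont_Psq]. Qed.

Lemma cont_t {R : realType} {N : nat} : continuous (fun z : 'rV[R]_N.+1 * R => z.2).
Proof. move=> z; exact: cvg_snd. Qed.

Definition Gfun {R : realType} {N : nat} (M d t0 A : R) (z : 'rV[R]_N.+1 * R) : R :=
  M * xlast z.1 + d * (Psq z.1 + (t0 - z.2) + A * (xlast z.1 * (1 - xlast z.1))).

Lemma cont_G {R : realType} {N : nat} (M d t0 A : R) : continuous (@Gfun R N M d t0 A).
Proof.
move=> z; rewrite /Gfun.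
apply: cvgD; first by apply: cvgM; [exact: cvg_cst | exact: cont_xl].
apply: cvgM; first exact: cvg_cst.
apply: cvgD; first apply: cvgD; first exact: cont_ps.
  by apply: cvgB; [exact: cvg_cst | exact: cont_t].
apply: cvgM; first exact: cvg_cst.
apply: cvgM; first exact: cont_xl.
by apply: cvgB; [exact: cvg_cst | exact: cont_xl].
Qed.

Definition Hfun {R : realType} (E a : R) : R := 1 + 4 * E * a - E * a ^+ 2.

Lemma cont_H {R : realType} {N : nat} (E : R) : continuous (fun z : 'rV[R]_N.+1 * R => Hfun E (xlast z.1)).
Proof.
move=> z; rewrite /Hfun.
apply: cvgB; first apply: cvgD; first exact: cvg_cst.
  by apply: cvgM; [exact: cvg_cst | exact: cont_xl].
apply: cvgM; first exact: cvg_cst.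
by rewrite expr2; apply: cvgM; exact: cont_xl.
Qed.

Lemma within_add {R : realType} {T : topologicalType} (A : set T) (f g : T -> R) :
  {within A, continuous f} -> continuous g -> {within A, continuous (fun z => f z + g z)}.
Proof.
move=> hf hg z; apply: cvgD; first exact: hf.
exact: (continuous_subspaceT hg).
Qed.

Lemma within_expN {R : realType} {T : topologicalType} (A : set T) (f : T -> R) :
  {within A, continuous f} -> {within A, continuous (fun z => - expR (f z))}.
Proof.
move=> hf z; apply: cvgN.
exact: (continuous_comp (hf z) (@continuous_expR R _)).
Qed.


Lemma sum_b {R : realType} {N : nat} (c e : R) :
  \sum_(j < N.+1) (c - e * (ord_max == j)%:R ^+ 2) = (N.+1)%:R * c - e.
Proof.
rewrite sumrB sumr_const card_ord (bigD1 ord_max) //= eqxx.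
rewrite big1 ?addr0; last by move=> j /negbTE; rewrite eq_sym => ->; rewrite expr0n /= mulr0.
by rewrite expr1n mulr1 mulr_natl.
Qed.

Lemma le_eps {R : realType} (X Phi : R) : 0 <= Phi ->
  (forall d, 0 < d -> - (d * Phi) <= X) -> 0 <= X.
Proof.
move=> P0 H; rewrite leNgt; apply/negP => X0.
have P1 : 0 < Phi + 1 by lra.
have k0 : 0 < - X / (Phi + 1) by rewrite divr_gt0 //; lra.
have := H _ k0.
have Hk : - X / (Phi + 1) * (Phi + 1) = - X by rewrite divfK ?gt_eqF.
move: k0 Hk; set k := - X / (Phi + 1) => k0 Hk H2.
have : k * Phi + k = - X by rewrite -Hk; ring.
lra.
Qed.

Lemma Kset_Qbar {R : realType} {N : nat} (t0 : R) : t0 < 0 -> @Kset R N t0 `<=` @Qbar R N.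
Proof. move=> t0n [x t] [/= /andP[x0 _] tt0]; split => //=; lra. Qed.

Lemma b01 {R : realType} {N : nat} (j : 'I_N.+1) :
  ((ord_max == j)%:R = 0 :> R) \/ ((ord_max == j)%:R = 1 :> R).
Proof. by case: (ord_max == j); [right|left]. Qed.


Lemma line_quot (R : realType) (V : normedModType R) (f : V -> R) (x v : V) (s0 : R) :
  (fun h : R => h^-1 *: (((fun s : R => f (x + s *: v)) \o shift s0) (h *: 1) - f (x + s0 *: v)))
  = (fun h : R => h^-1 *: ((f \o shift (x + s0 *: v)) (h *: v) - f (x + s0 *: v))).
Proof.
apply: funext => h /=; congr (_ *: (f _ - _)).
rewrite /shift /= -[h%:A]/(h * 1) mulr1 scalerDl; by rewrite addrCA.
Qed.

Lemma derive_line (R : realType) (V : normedModType R) (f : V -> R) (x v : V) (s0 : R) :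
  'D_1 (fun s : R => f (x + s *: v)) s0 = 'D_v f (x + s0 *: v).
Proof. by rewrite /derive line_quot. Qed.

Lemma derivable_line (R : realType) (V : normedModType R) (f : V -> R) (x v : V) (s0 : R) :
  derivable f (x + s0 *: v) v -> derivable (fun s : R => f (x + s *: v)) s0 1.
Proof. by rewrite /derivable line_quot. Qed.

Lemma helper1 {R : realType} (X Y G0 G1 P : R) :
  X + G0 <= Y + G1 -> G1 = G0 + P -> X <= Y + P.
Proof. move=> H E; rewrite E in H; lra. Qed.

Lemma helper2 {R : realType} (X Y G0 G1 Q0 Q1 : R) :
  X + G0 <= Y + G1 -> G1 = G0 + (Q1 - Q0) -> X + Q0 <= Y + Q1.
Proof. move=> H E; rewrite E in H; lra. Qed.

Lemma lower_bound {R : realType} {N : nat} (p : R) (u : 'rV[R]_N.+1 -> R -> R) (M t0 : R) :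
  ancient_solution p u -> t0 < 0 -> 0 <= M ->
  (forall x t, 0 < xlast x <= 2^-1 -> t <= t0 -> `|u x t| <= M) ->
  forall x t, 0 <= xlast x <= 2^-1 -> t <= t0 -> - (2 * M * xlast x) <= u x t.
Proof.
move=> [C21 ucont pde bd] t0n M0 uM.
pose A : R := (N.+1)%:R + 1.
have A0 : 0 <= A by rewrite /A; apply: addr_ge0 => //; exact: ler0n.
pose W d (z : 'rV[R]_N.+1 * R) := u z.1 z.2 + Gfun (2 * M) d t0 A z.
have ub z : Kset t0 z -> - M <= u z.1 z.2.
  case: z => x t [/= /andP[x0 x1] tt0].
  have [xe|xp] := eqVneq (xlast x) 0.
    by rewrite bd //=; [lra | lra].
  have := uM x t; rewrite lt_def xp x0 x1 /= => /(_ isT tt0).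
  by rewrite ler_norml => /andP[].
have key d : 0 < d -> forall z, Kset t0 z -> 0 <= W d z.
  move=> d0 z0 Kz0; rewrite leNgt; apply/negP => Wz0.
  have Wc : {within Kset t0, continuous (W d)}.
    apply: (@within_add R _ _ (fun z => u z.1 z.2)); last exact: cont_G.
    exact: continuous_subspaceW (@Kset_Qbar R N t0 t0n) ucont.
  have Wco z : Kset t0 z -> - M + d * (Psq z.1 + (t0 - z.2)) <= W d z.
    move=> Kz; have := ub z Kz; case: z Kz => x t [/= /andP[x0 x1] tt0].
    rewrite /W /Gfun /= => H.
    have : 0 <= 2 * M * xlast x by apply: mulr_ge0 => //; apply: mulr_ge0.
    have : 0 <= d * (A * (xlast x * (1 - xlast x))).
      apply: mulr_ge0; first lra.
      by apply: mulr_ge0 => //; apply: mulr_ge0; lra.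
    move=> H1 H2; rewrite mulrDr [d * (_ + _ + _)]mulrDr; lra.
  have [[x t] Km zmin] := exists_min (W d) t0 (- M) d d0 Wc Wco z0 Kz0 Wz0.
  have Wm : W d (x, t) < 0 := le_lt_trans (zmin z0 Kz0) Wz0.
  move: Km => [/= /andP[xa0 xa1] tt0].
  set a := xlast x in xa0 xa1.
  have Wmexp : W d (x, t) = u x t + (2 * M * a + d * (Psq x + (t0 - t) + A * (a * (1 - a)))) by [].
  have a0 : 0 < a.
    rewrite lt_def xa0 andbT; apply/negP => /eqP a0.
    move: Wm; rewrite Wmexp bd //; last lra.
    rewrite -/a a0 mulr0 mul0r mulr0 !addr0 add0r => H.
    have : 0 <= d * (Psq x + (t0 - t)).
      by apply: mulr_ge0; [lra | have := Psq_ge0 x; lra].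
    lra.
  have a1 : a < 2^-1.
    rewrite lt_def xa1 andbT; apply/negP => /eqP a1.
    move: Wm; rewrite Wmexp -/a -a1 => H.
    have := ub (x, t); rewrite /= => /(_ (conj (introT andP (conj xa0 xa1)) tt0)) H2.
    have : 0 <= d * (Psq x + (t0 - t) + A * (2^-1 * (1 - 2^-1))).
      apply: mulr_ge0; first lra.
      apply: addr_ge0; first by have := Psq_ge0 x; lra.
      by apply: mulr_ge0 => //; lra.
    have : 2 * M * 2^-1 = M by rewrite mulrAC divff ?mul1r.
    lra.
  pose r := minr a (2^-1 - a).
  have r0 : 0 < r by rewrite /r lt_min a0 /=; lra.
  have ra : r <= a by rewrite /r ge_min lexx.
  have rb : r <= 2^-1 - a by rewrite /r ge_min lexx orbT.
  pose b (j : 'I_N.+1) : R := (ord_max == j)%:R.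
  have sh s j : - r < s < r -> 0 < a + s * b j < 2^-1.
    move=> /andP[s1 s2]; rewrite /b; have [->|->] := @b01 R N j;
      rewrite ?mulr0 ?mulr1 ?addr0; apply/andP; split; lra.
  have Qs s j : - r < s < r -> Qset (x + s *: unitv R j, t).
    move=> sr; have /andP[h1 h2] := sh s j sr.
    split => /=; [by rewrite xlast_shift | lra].
  have Ks s j : - r < s < r -> Kset t0 (x + s *: unitv R j, t).
    move=> sr; have /andP[h1 h2] := sh s j sr.
    split => //=; rewrite xlast_shift -/a -/(b j); apply/andP; split; lra.
  have Q0 : Qset (x, t) by split => //=; lra.
  have [_ [dut _] Hx Hxx] := C21 (x, t) Q0.
  have dir j : 0 <= uxx u j j x t + 2 * (d - d * A * b j ^+ 2).
    pose h := fun s => u (x + s *: unitv R j) t.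
    have Dh : 'D_1 h = fun s => ux u j (x + s *: unitv R j) t.
      by apply: funext => s; rewrite /h; exact: derive_line.
    have D2 : 'D_1 ('D_1 h) 0 = uxx u j j x t.
      by rewrite Dh derive_line scale0r addr0.
    rewrite -D2.
    apply: (@so_lin R h (2 * M * b j + d * (2 * x ord0 j + A * b j * (1 - 2 * a))) _ r r0).
    - move=> s sr; have := zmin _ (Ks s j sr).
      rewrite Wmexp /W /Gfun /= Psq_shift xlast_shift -/a /h scale0r addr0 => H.
      apply: (helper1 _ _ _ _ _ H); rewrite /b; ring.
    - move=> s sr; have [_ _ H _] := C21 _ (Qs s j sr); have [dv _] := H j.
      exact: derivable_line dv.
    - rewrite Dh; have [dv _] := Hxx j j.
      have := @derivable_line R _ (fun y => ux u j y t) x (unitv R j) 0.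
      by rewrite scale0r addr0; apply.
  have tm : ut u x t + - d <= 0.
    apply: (@t_lin R (fun s => u x s) t (- d) 1) => //.
    move=> s /andP[s1 s2].
    have Kxs : Kset t0 (x, s) by split => //=; [apply/andP; split | lra].
    have := zmin _ Kxs; rewrite Wmexp /W /Gfun /= -/a => H.
    apply: (helper2 _ _ _ _ _ _ H); ring.
  have Hs : 0 <= \sum_(j < N.+1) (uxx u j j x t + 2 * (d - d * A * b j ^+ 2)).
    by apply: sumr_ge0 => j _; exact: dir j.
  rewrite big_split /= -mulr_sumr /b sum_b in Hs.
  have EA : (N.+1)%:R * d - d * A = - d by rewrite /A; ring.
  rewrite EA in Hs.
  have := pde x t a0 (le_lt_trans tt0 t0n).
  have := powR_ge0 (gradnorm u x t) p.
  rewrite /laplacian; lra.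
move=> x t /andP[x0 x1] tt0.
have Kz : Kset t0 (x, t) by split => //=; apply/andP.
have Phi0 : 0 <= Psq x + (t0 - t) + A * (xlast x * (1 - xlast x)).
  apply: addr_ge0; first by have := Psq_ge0 x; lra.
  by apply: mulr_ge0 => //; apply: mulr_ge0; lra.
suff : 0 <= u x t + 2 * M * xlast x by lra.
apply: (le_eps _ _ Phi0) => dd dd0.
have := key dd dd0 _ Kz; rewrite /W /Gfun /=; lra.
Qed.



Lemma pow_le {R : realType} (g p : R) : 0 <= g -> 1 < p <= 2 -> g `^ p <= 1 + g ^+ 2.
Proof.
move=> g0 /andP[p1 p2].
have [g1|g1] := leP g 1.
  have : g `^ p <= 1.
    have [->|gp] := eqVneq g 0; first by rewrite powR0 ?gt_eqF //; lra.
    have g0' : 0 < g by rewrite lt_def gp g0.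
    have := @ge1r_powR R g p; rewrite g0' g1 /= => /(_ isT (ltW p1)); lra.
  have := sqr_ge0 g; lra.
have : g `^ p <= g `^ 2%:R by apply: ler_powR; [lra | rewrite /=; lra].
rewrite powR_mulrn; [lra | lra].
Qed.

Lemma upper_bound {R : realType} {N : nat} (p : R) (u : 'rV[R]_N.+1 -> R -> R) (M t0 : R) :
  1 < p <= 2 -> ancient_solution p u -> t0 < 0 -> 0 <= M ->
  (forall x t, 0 < xlast x <= 2^-1 -> t <= t0 -> `|u x t| <= M) ->
  forall x t, 0 <= xlast x <= 2^-1 -> t <= t0 -> u x t <= 4 * expR M * xlast x.
Proof.
move=> hp [C21 ucont pde bd] t0n M0 uM.
pose E := expR M.
have E0 : 0 < E := expR_gt0 M.
pose A : R := (N.+1)%:R + 1.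
have A0 : 0 <= A by rewrite /A; apply: addr_ge0 => //; exact: ler0n.
pose W d (z : 'rV[R]_N.+1 * R) :=
  - expR (u z.1 z.2) + (Hfun E (xlast z.1) + Gfun 0 d t0 A z).
have ub z : Kset t0 z -> expR (u z.1 z.2) <= E.
  case: z => x t [/= /andP[x0 x1] tt0]; rewrite /E ler_expR.
  have [xe|xp] := eqVneq (xlast x) 0.
    by rewrite bd //=; lra.
  have := uM x t; rewrite lt_def xp x0 x1 /= => /(_ isT tt0).
  by rewrite ler_norml => /andP[].
have Hge1 a : 0 <= a <= 2^-1 -> 1 <= Hfun E a.
  move=> /andP[a0 a1]; rewrite /Hfun.
  have : 0 <= E * (a * (4 - a)) by apply: mulr_ge0; [lra | apply: mulr_ge0; lra].
  move=> H; have : E * (a * (4 - a)) = 4 * E * a - E * a ^+ 2 by ring.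
  lra.
have key d : 0 < d -> forall z, Kset t0 z -> 0 <= W d z.
  move=> d0 z0 Kz0; rewrite leNgt; apply/negP => Wz0.
  have Wc : {within Kset t0, continuous (W d)}.
    apply: (@within_add R _ _ (fun z => - expR (u z.1 z.2))).
      apply: within_expN.
      exact: continuous_subspaceW (@Kset_Qbar R N t0 t0n) ucont.
    by move=> z; apply: cvgD; [exact: cont_H | exact: cont_G].
  have Wco z : Kset t0 z -> (1 - E) + d * (Psq z.1 + (t0 - z.2)) <= W d z.
    move=> Kz; have := ub z Kz; case: z Kz => x t [/= /andP[x0 x1] tt0].
    rewrite /W /Gfun /= => H.
    have H3 := Hge1 _ (introT andP (conj x0 x1)).
    have : 0 <= d * (A * (xlast x * (1 - xlast x))).
      apply: mulr_ge0; first lra.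
      by apply: mulr_ge0 => //; apply: mulr_ge0; lra.
    move=> H1; rewrite mulrDr [d * (_ + _ + _)]mulrDr mul0r; lra.
  have [[x t] Km zmin] := exists_min (W d) t0 (1 - E) d d0 Wc Wco z0 Kz0 Wz0.
  have Wm : W d (x, t) < 0 := le_lt_trans (zmin z0 Kz0) Wz0.
  move: Km => [/= /andP[xa0 xa1] tt0].
  set a := xlast x in xa0 xa1.
  have Wmexp : W d (x, t) = - expR (u x t) +
     (Hfun E a + (0 * a + d * (Psq x + (t0 - t) + A * (a * (1 - a))))) by [].
  have a0 : 0 < a.
    rewrite lt_def xa0 andbT; apply/negP => /eqP a0.
    move: Wm; rewrite Wmexp bd //; last lra.
    rewrite -/a a0 expR0 /Hfun !(mulr0, mul0r) expr0n /= mulr0 !addr0 => H.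
    have : 0 <= d * (Psq x + (t0 - t)).
      by apply: mulr_ge0; [lra | have := Psq_ge0 x; lra].
    lra.
  have a1 : a < 2^-1.
    rewrite lt_def xa1 andbT; apply/negP => /eqP a1.
    move: Wm; rewrite Wmexp -/a -a1 => H.
    have := ub (x, t); rewrite /= => /(_ (conj (introT andP (conj xa0 xa1)) tt0)) H2.
    have : 0 <= d * (Psq x + (t0 - t) + A * (2^-1 * (1 - 2^-1))).
      apply: mulr_ge0; first lra.
      apply: addr_ge0; first by have := Psq_ge0 x; lra.
      by apply: mulr_ge0 => //; lra.
    have : Hfun E 2^-1 = 1 + E * (7 / 4) by rewrite /Hfun; field.
    have : 0 <= E * (7 / 4) by apply: mulr_ge0; lra.
    lra.
  pose r := minr a (2^-1 - a).
  have r0 : 0 < r by rewrite /r lt_min a0 /=; lra.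
  have ra : r <= a by rewrite /r ge_min lexx.
  have rb : r <= 2^-1 - a by rewrite /r ge_min lexx orbT.
  pose b (j : 'I_N.+1) : R := (ord_max == j)%:R.
  have sh s j : - r < s < r -> 0 < a + s * b j < 2^-1.
    move=> /andP[s1 s2]; rewrite /b; have [->|->] := @b01 R N j;
      rewrite ?mulr0 ?mulr1 ?addr0; apply/andP; split; lra.
  have Qs s j : - r < s < r -> Qset (x + s *: unitv R j, t).
    move=> sr; have /andP[h1 h2] := sh s j sr.
    split => /=; [by rewrite xlast_shift | lra].
  have Ks s j : - r < s < r -> Kset t0 (x + s *: unitv R j, t).
    move=> sr; have /andP[h1 h2] := sh s j sr.
    split => //=; rewrite xlast_shift -/a -/(b j); apply/andP; split; lra.
  have Q0 : Qset (x, t) by split => //=; lra.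
  have [_ [dut _] Hx Hxx] := C21 (x, t) Q0.
  have dir j : expR (u x t) * (uxx u j j x t + (ux u j x t) ^+ 2)
                 <= 2 * (d - (d * A + E) * b j ^+ 2).
    pose h := fun s => u (x + s *: unitv R j) t.
    have Dh : 'D_1 h = fun s => ux u j (x + s *: unitv R j) t.
      by apply: funext => s; rewrite /h; exact: derive_line.
    have D2 : 'D_1 ('D_1 h) 0 = uxx u j j x t.
      by rewrite Dh derive_line scale0r addr0.
    have D1 : 'D_1 h 0 = ux u j x t by rewrite /h (@derive_line R _ (fun y => u y t)) scale0r addr0.
    have h0 : h 0 = u x t by rewrite /h scale0r addr0.
    rewrite -D2 -D1 -h0.
    apply: (@so_exp R h (4 * E * b j - 2 * E * a * b j
               + d * (2 * x ord0 j + A * b j * (1 - 2 * a))) _ r r0).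
    - move=> s sr; have := zmin _ (Ks s j sr).
      rewrite Wmexp /W /Gfun /= Psq_shift xlast_shift -/a h0 => H.
      apply: (helper1 _ _ _ _ _ H); rewrite /b /Hfun; ring.
    - move=> s sr; have [_ _ H _] := C21 _ (Qs s j sr); have [dv _] := H j.
      exact: derivable_line dv.
    - rewrite Dh; have [dv _] := Hxx j j.
      have := @derivable_line R _ (fun y => ux u j y t) x (unitv R j) 0.
      by rewrite scale0r addr0; apply.
  have tm : - (expR (u x t) * ut u x t) + - d <= 0.
    apply: (@t_exp R (fun s => u x s) t (- d) 1) => //.
    move=> s /andP[s1 s2].
    have Kxs : Kset t0 (x, s) by split => //=; [apply/andP; split | lra].
    have := zmin _ Kxs; rewrite Wmexp /W /Gfun /= -/a => H.
    apply: (helper2 _ _ _ _ _ _ H); ring.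
  have Hs : \sum_(j < N.+1) expR (u x t) * (uxx u j j x t + (ux u j x t) ^+ 2)
         <= \sum_(j < N.+1) 2 * (d - (d * A + E) * b j ^+ 2).
    by apply: ler_sum => j _; exact: dir j.
  rewrite -mulr_sumr -mulr_sumr big_split /= /b sum_b in Hs.
  have EA : (N.+1)%:R * d - (d * A + E) = - d - E by rewrite /A; ring.
  rewrite EA in Hs.
  have := pde x t a0 (le_lt_trans tt0 t0n).
  have S0 : 0 <= \sum_(j < N.+1) (ux u j x t) ^+ 2.
    by apply: sumr_ge0 => j _; exact: sqr_ge0.
  have := pow_le (gradnorm u x t) p (sqrtr_ge0 _) hp.
  rewrite /gradnorm sqr_sqrtr // => Hp Hpde.
  rewrite /laplacian in Hpde.
  set e := expR (u x t) in Hs tm.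
  set S := \sum_(j < N.+1) (ux u j x t) ^+ 2 in Hs Hp S0.
  set L := \sum_(j < N.+1) uxx u j j x t in Hs Hpde.
  have e0 : 0 < e by exact: expR_gt0.
  have eE : e <= E by have := ub (x, t); apply; split => //=; apply/andP.
  have X1 : ut u x t - L - S <= 1 by lra.
  have : e * (ut u x t - L - S) <= e * 1 by rewrite ler_pM2l.
  have : e * (ut u x t - L - S) = e * ut u x t - e * (L + S) by ring.
  lra.
move=> x t /andP[x0 x1] tt0.
have Kz : Kset t0 (x, t) by split => //=; apply/andP.
have Phi0 : 0 <= Psq x + (t0 - t) + A * (xlast x * (1 - xlast x)).
  apply: addr_ge0; first by have := Psq_ge0 x; lra.
  by apply: mulr_ge0 => //; apply: mulr_ge0; lra.
have : 0 <= Hfun E (xlast x) + 0 * xlast x - expR (u x t).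
  apply: (le_eps _ _ Phi0) => dd dd0.
  have := key dd dd0 _ Kz; rewrite /W /Gfun /=; lra.
have := expR_ge1Dx (u x t).
have : 0 <= E * xlast x ^+ 2 by apply: mulr_ge0; [lra | exact: sqr_ge0].
rewrite /Hfun mul0r -/E; lra.
Qed.



Theorem lemma5p6 (R : realType) (N : nat) (p : R) (hp : 1 < p <= 2) (M1 : R) :
  exists C : R, 0 < C /\
    forall (u : 'rV[R]_N.+1 -> R -> R) (eps : R),
      ancient_solution p u -> 0 < eps ->
      has_ubound (absvals u (Gamma1_eps eps)) ->
      sup (absvals u (Gamma1_eps eps)) = M1 ->
      forall (x : 'rV[R]_N.+1) (t : R), @Gamma1_eps R N eps (x, t) ->
        `|u x t| <= C * xlast x.
Proof.
pose M := `|M1|.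
have M0 : 0 <= M := normr_ge0 M1.
have E0 : 0 < expR M := expR_gt0 M.
exists (2 * M + 4 * expR M); split; first lra.
move=> u eps anc eps0 hub hsup x t [/= /andP[x0 x1] teps].
have uM' : forall y s, 0 < xlast y < 1 -> s <= - eps -> `|u y s| <= M.
  move=> y s ys se.
  have : `|u y s| <= M1.
    rewrite -hsup; apply: (ub_le_sup hub); exists (y, s) => //.
  have := ler_norm M1; rewrite -/M; lra.
have uM : forall y s, 0 < xlast y <= 2^-1 -> s <= - eps -> `|u y s| <= M.
  move=> y s /andP[y0 y1] se; apply: uM' => //; apply/andP; split => //; lra.
have t0n : - eps < 0 by lra.
have [xh|xh] := leP (xlast x) 2^-1.
  have xr : 0 <= xlast x <= 2^-1 by apply/andP; split => //; lra.
  have lo := lower_bound p u M (- eps) anc t0n M0 uM x t xr teps.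
  have up := upper_bound p u M (- eps) hp anc t0n M0 uM x t xr teps.
  rewrite ler_norml; apply/andP; split.
    have : 0 <= 4 * expR M * xlast x by apply: mulr_ge0; lra.
    rewrite mulrDl; lra.
  have : 0 <= 2 * M * xlast x by apply: mulr_ge0; [lra | lra].
  rewrite mulrDl; lra.
have := uM' x t (introT andP (conj x0 x1)) teps.
have : 0 <= 4 * expR M * xlast x by apply: mulr_ge0; lra.
have : M <= 2 * M * xlast x.
  nra.
rewrite mulrDl; lra.
Qed.
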